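(* For every integer $n\ge 1$, \[ \sum_{k=0}^{n}\Big(-\frac{1}{4}\Big)^k\binom{n}{k}\binom{1+2k}{k}\,k^2H_{1+2k} =\frac{3n(2-3n)}{(3-2n)(1-4n^2)4^n}\binom{1+2n}{n} \Big\{2H_{1+2n}-\frac{3}{2}H_n-\frac{3-8n-12n^2}{1-4n^2}+\frac{9+n(3-25n+6n^2)}{3n(3-2n)(2-3n)}\Big\}-\frac{1}{1+n}. \]
   Context: For an integer $m\ge 0$, $H_m$ denotes the $m$-th harmonic number: $H_0=0$ and $H_m=\sum_{j=1}^m \frac1j$ for $m\ge1$. $\binom{n}{k}$ is the usual binomial coefficient. *)

(* Defs.v *)
From HB Require Import structures.
From mathcomp Require Import all_boot all_order all_algebra.
Set Implicit Arguments. Unset Strict Implicit. Unset Printing Implicit Defensive.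
Import Order.TTheory GRing.Theory Num.Theory.
Local Open Scope ring_scope.

Definition harm (m : nat) : rat := \sum_(1 <= j < m.+1) (j%:R)^-1.

(* Main.v *)
Require Import Defs.
From HB Require Import structures.
From mathcomp Require Import all_boot all_order all_algebra.
From mathcomp Require Import ring lra zify.
Import Order.TTheory GRing.Theory Num.Theory.
Local Open Scope ring_scope.

Definition tt_ (m k : nat) : rat :=
  (- (1/4 : rat)) ^+ k * ('C(m, k))%:R * ('C(1 + 2 * k, k))%:R.
Definition ff (m k : nat) : rat := tt_ m k * (k%:R) ^+ 2 * harm (1 + 2 * k).

Lemma natS (m : nat) : (m.+1)%:R = m%:R + 1 :> rat.
Proof. by rewrite -addn1 natrD. Qed.

Lemma harmS m : harm m.+1 = harm m + ((m.+1)%:R)^-1.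
Proof. by rewrite /harm big_nat_recr. Qed.

Lemma harm2 k : harm (1 + 2 * k.+1) =
  harm (1 + 2 * k) + (2 * k%:R + 2)^-1 + (2 * k%:R + 3)^-1.
Proof.
have -> : (1 + 2 * k.+1 = (1 + 2 * k).+2)%N by lia.
rewrite !harmS.
have -> : ((1 + 2 * k).+1)%:R = 2 * k%:R + 2 :> rat.
  have -> : ((1 + 2 * k).+1 = 2 * k + 2)%N by lia.
  by rewrite natrD natrM.
have -> : ((1 + 2 * k).+2)%:R = 2 * k%:R + 3 :> rat.
  have -> : ((1 + 2 * k).+2 = 2 * k + 3)%N by lia.
  by rewrite natrD natrM.
by [].
Qed.

Lemma tA m k : tt_ m k * (m%:R + 1) = tt_ m.+1 k * (m%:R + 1 - k%:R).
Proof.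
rewrite /tt_.
have H : ('C(m, k))%:R * (m%:R + 1) = ('C(m.+1, k))%:R * (m%:R + 1 - k%:R) :> rat.
  case: (leqP k m.+1) => hk.
    have := mul_bin_down m.+1 k => /= /(congr1 (fun x => x%:R : rat)).
    rewrite !natrM natrB // natS => e. rewrite mulrC e; ring.
  by rewrite !bin_small //; [rewrite !mul0r | lia].
transitivity ((- (1/4 : rat)) ^+ k * ('C(1 + 2 * k, k))%:R * (('C(m, k))%:R * (m%:R + 1))); first ring.
rewrite H; ring.
Qed.

Lemma cenB k : (k.+2 * 'C(1 + 2 * k.+1, k.+1) = 2 * (2 * k + 3) * 'C(1 + 2 * k, k))%N.
Proof.
have e1 := mul_bin_diag (2 * k + 3) k.+1.
have e2 := mul_bin_diag (2 * k + 2) k.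
have e3 : 'C(1 + 2 * k.+1, k.+1) = 'C(2 * k + 3, k.+2).
  have -> : (1 + 2 * k.+1 = 2 * k + 3)%N by lia.
  rewrite -bin_sub; last lia. congr 'C(_, _); lia.
have h1 : (2 * k + 3).-1 = (2 * k + 2)%N by lia.
have h2 : (2 * k + 2).-1 = (1 + 2 * k)%N by lia.
rewrite h1 in e1; rewrite h2 in e2.
apply/eqP; rewrite -(eqn_pmul2l (ltn0Sn k)); apply/eqP.
rewrite e3 -e1 mulnCA -e2. ring.
Qed.

Lemma tB m k : 2 * (k%:R + 1) * (k%:R + 2) * tt_ m k.+1
   = - (m%:R - k%:R) * (2 * k%:R + 3) * tt_ m k.
Proof.
rewrite /tt_.
have H1 : (k%:R + 1) * ('C(m, k.+1))%:R = (m%:R - k%:R) * ('C(m, k))%:R :> rat.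
  case: (leqP k m) => hk.
    have := mul_bin_left m k => /(congr1 (fun x => x%:R : rat)).
    by rewrite !natrM natrB // natS.
  by rewrite !bin_small //; [rewrite !mulr0 | lia].
have H2 : (k%:R + 2) * ('C(1 + 2 * k.+1, k.+1))%:R
     = 2 * (2 * k%:R + 3) * ('C(1 + 2 * k, k))%:R :> rat.
  have := cenB k => /(congr1 (fun x => x%:R : rat)).
  have -> : k.+2 = (k + 2)%N by lia.
  rewrite !natrM !natrD. move=> ->. ring.
rewrite exprS.
transitivity (2 * (- (1 / 4)) * (- (1 / 4)) ^+ k * ((k%:R + 1) * ('C(m, k.+1))%:R) * ((k%:R + 2) * ('C(1 + 2 * k.+1, k.+1))%:R) : rat); first ring.
rewrite H1 H2. by field.
Qed.

Definition pe (l : seq rat) (x : rat) : rat := foldr (fun a acc => a + x * acc) 0 l.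
Definition c0 (n : nat) : rat := pe [:: 306; 1599; 1393; (-1067); (-1417); 2; 324; 72] n%:R.
Definition c1 (n : nat) : rat := pe [:: (-192); (-1088); 952; 2808; 170; (-1732); (-936); (-144)] n%:R.
Definition c2 (n : nat) : rat := pe [:: (-144); (-936); (-1256); 604; 2420; 1892; 612; 72] n%:R.
Definition Pk (n : nat) (y : rat) : rat := pe [:: pe [:: (-324); (-1002); (-1008); (-366); (-36)] n%:R; pe [:: 642; 2172; 1962; 492] n%:R; pe [:: (-420); (-1618); (-1096); 90; 108] n%:R; pe [:: 102; 448; 142; (-216); (-72)] n%:R] y.
Definition Rk (n : nat) (y : rat) : rat := pe [:: pe [:: 162; 501; 504; 183; 18] n%:R; pe [:: 165; 417; 531; 303; 54] n%:R; pe [:: (-529); (-1735); (-1819); (-717); (-90)] n%:R; pe [:: (-151); (-213); (-305); (-243); (-54)] n%:R; pe [:: 313; 1094; 1217; 522; 72] n%:R; pe [:: (-68); (-344); (-324); (-72)] n%:R] y.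

Definition GG (n k : nat) : rat :=
  tt_ n.+2 k * (k%:R * (k%:R + 1) * Pk n k%:R * harm (1 + 2 * k) + Rk n k%:R).

Lemma ne0 (a : rat) : 0 < a -> a != 0.
Proof. by move=> h; rewrite gt_eqF. Qed.

Ltac sidec n k := repeat (apply/andP; split); apply: ne0;
  have := ler0n rat k; have := ler0n rat n; intros; nra.

Lemma pw n k : c0 n * ff n k + c1 n * ff n.+1 k + c2 n * ff n.+2 k = GG n k.+1 - GG n k.
Proof.
set x : rat := n%:R. set y : rat := k%:R.
have hx : 0 <= x by rewrite /x ler0n.
have hy : 0 <= y by rewrite /y ler0n.
have x1 : (n.+1)%:R = x + 1 by rewrite /x -addn1 natrD.
have x2 : (n.+2)%:R = x + 2 by rewrite /x -addn2 natrD.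
have y1 : (k.+1)%:R = y + 1 by rewrite /y -addn1 natrD.
have e0 : tt_ n k = (x + 1 - y) / (x + 1) * tt_ n.+1 k.
  have := tA n k; rewrite -/x -/y => e.
  apply: (@mulIf _ (x + 1)); first by apply: ne0; lra.
  rewrite e; field; apply: ne0; lra.
have e1 : tt_ n.+1 k = (x + 2 - y) / (x + 2) * tt_ n.+2 k.
  have := tA n.+1 k; rewrite x1 -/y => e.
  apply: (@mulIf _ (x + 2)); first by apply: ne0; lra.
  have -> : x + 2 = x + 1 + 1 by ring.
  rewrite e; field; apply: ne0; lra.
have e2 : tt_ n.+2 k.+1 = - (x + 2 - y) * (2 * y + 3) / (2 * (y + 1) * (y + 2)) * tt_ n.+2 k.
  have := tB n.+2 k; rewrite x2 -/y => e.
  apply: (@mulrI _ (2 * (y + 1) * (y + 2))).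
    by rewrite unitfE; apply: ne0; nra.
  rewrite e; field. sidec n k.
rewrite /GG /ff harm2 y1 -/y e0 e1 e2.
rewrite /c0 /c1 /c2 /Pk /Rk /pe /= -/x.
field. sidec n k.
Qed.

Definition Rhs (n : nat) : rat :=
  (3 * n%:R * (2 - 3 * n%:R))
      / ((3 - 2 * n%:R) * (1 - 4 * n%:R ^+ 2) * 4 ^+ n)
      * ('C(1 + 2 * n, n))%:R
      * (2 * harm (1 + 2 * n) - 3 / 2 * harm n
         - (3 - 8 * n%:R - 12 * n%:R ^+ 2) / (1 - 4 * n%:R ^+ 2)
         + (9 + n%:R * (3 - 25 * n%:R + 6 * n%:R ^+ 2))
             / (3 * n%:R * (3 - 2 * n%:R) * (2 - 3 * n%:R)))
    - 1 / (1 + n%:R).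

Lemma cenR n : ('C(1 + 2 * n.+1, n.+1))%:R = 2 * (2 * n%:R + 3) / (n%:R + 2) * ('C(1 + 2 * n, n))%:R :> rat.
Proof.
have := cenB n => /(congr1 (fun x => x%:R : rat)).
have -> : n.+2 = (n + 2)%N by lia.
rewrite !natrM !natrD => e.
apply: (@mulrI _ (n%:R + 2)).
  by rewrite unitfE; apply: ne0; have := ler0n rat n; intros; lra.
rewrite e; field. apply: ne0; have := ler0n rat n; intros; lra.
Qed.

Lemma ne0' (a : rat) : a < 0 -> a != 0.
Proof. by move=> h; rewrite lt_eqF. Qed.

Ltac sidec2 h1 hx3 := repeat (apply/andP; split);
  first [ exact: hx3 | exact: expf_neq0 | apply: ne0; nra | apply: ne0'; nra ].

Lemma rhsrec n : (1 <= n)%N ->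
  c0 n * Rhs n + c1 n * Rhs n.+1 + c2 n * Rhs n.+2 = - Rk n 0.
Proof.
move=> hn.
have h1 : 1 <= n%:R :> rat by rewrite ler1n.
set x : rat := n%:R.
have x1 : (n.+1)%:R = x + 1 by rewrite /x -addn1 natrD.
have x2 : (n.+2)%:R = x + 2 by rewrite /x -addn2 natrD.
have hC1 := cenR n. have hC2 := cenR n.+1.
rewrite /Rhs hC2 hC1 !harm2 !harmS !exprS x2 x1 -/x.
rewrite /c0 /c1 /c2 /Rk /pe /= -/x.
have hx3 : 3 - 2 * n%:R != 0 :> rat.
  case: n hn {x x1 x2 hC1 hC2 h1} => [//|[|m]] _; first by [].
  apply: ne0'. have := ler0n rat m. rewrite !natS. intros; lra.
field. sidec2 h1 hx3.
Qed.

Definition LL (n : nat) : rat := \sum_(0 <= k < n.+1) ff n k.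

Lemma ff0 m k : (m < k)%N -> ff m k = 0.
Proof. by move=> h; rewrite /ff /tt_ bin_small // !mulr0 !mul0r. Qed.

Lemma Lext m j : LL m = \sum_(0 <= k < (m + j).+1) ff m k.
Proof.
elim: j => [|j IH]; first by rewrite addn0.
by rewrite IH addnS [RHS]big_nat_recr //= ff0 ?addr0 //; lia.
Qed.

Lemma tt0 m : tt_ m 0 = 1.
Proof. by rewrite /tt_ expr0 !bin0 !mul1r. Qed.


Lemma sum3 (F0 F1 F2 G : nat -> rat) (a b c : rat) N :
  (forall k, a * F0 k + b * F1 k + c * F2 k = G k.+1 - G k) ->
  a * \sum_(0 <= k < N) F0 k + b * \sum_(0 <= k < N) F1 k + c * \sum_(0 <= k < N) F2 k
  = G N - G 0.
Proof.
move=> h; rewrite !mulr_sumr -!big_split /=.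
rewrite (eq_bigr (fun k => G k.+1 - G k)); last by move=> k _; exact: h.
by rewrite telescope_sumr.
Qed.

Lemma Lrec n : c0 n * LL n + c1 n * LL n.+1 + c2 n * LL n.+2 = - Rk n 0.
Proof.
rewrite (Lext n 2) (Lext n.+1 1) addn2 addn1.
have -> : LL n.+2 = \sum_(0 <= k < n.+3) ff n.+2 k by [].
rewrite (@sum3 (ff n) (ff n.+1) (ff n.+2) (GG n) (c0 n) (c1 n) (c2 n) n.+3 (pw n)).
rewrite /GG tt0 /tt_ (@bin_small n.+2 n.+3) //.
by rewrite !mulr0 !mul0r sub0r mul1r add0r.
Qed.

Lemma base1 : LL 1 = Rhs 1.
Proof. apply/eqP. rewrite /LL /Rhs /ff /tt_ /harm unlock. by vm_compute. Qed.
Lemma base2 : LL 2 = Rhs 2.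
Proof. apply/eqP. rewrite /LL /Rhs /ff /tt_ /harm unlock. by vm_compute. Qed.

Lemma c2nz n : (1 <= n)%N -> c2 n != 0.
Proof.
move=> hn. have h1 : 1 <= n%:R :> rat by rewrite ler1n.
have -> : c2 n = 4 * ((n%:R + 1) ^+ 2 * (n%:R + 2) * (n%:R + 3)) *
   (18 * n%:R ^+ 3 + 27 * n%:R ^+ 2 - 22 * n%:R - 6).
  rewrite /c2 /pe /=. ring.
apply: ne0. apply: mulr_gt0; first (apply: mulr_gt0; first lra).
  apply: mulr_gt0; first apply: mulr_gt0; first (apply: exprn_gt0; lra). lra. lra.
have h2 : 1 <= n%:R ^+ 2 :> rat by nra.
have h3 : 1 <= n%:R ^+ 3 :> rat by nra.
nra.
Qed.

Lemma mainL n : (1 <= n)%N -> LL n = Rhs n /\ LL n.+1 = Rhs n.+1.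
Proof.
elim: n => [//|n IH] hn.
case: n IH hn => [|m] IH hn; first by split; [exact: base1 | exact: base2].
have [e0 e1] := IH isT. split => //.
have hm : (1 <= m.+1)%N by [].
have A := Lrec m.+1. have B := rhsrec m.+1 hm.
apply: (mulfI (c2nz m.+1 hm)).
apply: (@addrI _ (c0 m.+1 * LL m.+1 + c1 m.+1 * LL m.+2)).
rewrite A {1}e0 e1 B. by [].
Qed.

Theorem theorem12 (n : nat) (hn : (1 <= n)%N) :
  \sum_(0 <= k < n.+1)
     (- (1/4 : rat)) ^+ k * ('C(n, k))%:R * ('C(1 + 2 * k, k))%:R
       * (k%:R) ^+ 2 * harm (1 + 2 * k)
  = (3 * n%:R * (2 - 3 * n%:R))
      / ((3 - 2 * n%:R) * (1 - 4 * n%:R ^+ 2) * 4 ^+ n)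
      * ('C(1 + 2 * n, n))%:R
      * (2 * harm (1 + 2 * n) - 3 / 2 * harm n
         - (3 - 8 * n%:R - 12 * n%:R ^+ 2) / (1 - 4 * n%:R ^+ 2)
         + (9 + n%:R * (3 - 25 * n%:R + 6 * n%:R ^+ 2))
             / (3 * n%:R * (3 - 2 * n%:R) * (2 - 3 * n%:R)))
    - 1 / (1 + n%:R).
Proof. exact: (mainL n hn).1. Qed.
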